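(* As formal power series, $$1+\frac{q^2+q^3}{1-q^2}+\sum_{n\ge2}\frac{(-q^3;q^4)_{n-1}\,q^{2n}(1+q^{2n-1})}{(q^2;q^2)_n}=\prod_{\substack{n\ge1\\ n\not\equiv1,5,6\ (\mathrm{mod}\ 8)}}\frac{1}{1-q^n}.$$
   Context: $(a;q)_n=\prod_{j=0}^{n-1}(1-aq^j)$. *)

(* Defs.v *)
From mathcomp Require Import all_boot all_order all_algebra.
Set Implicit Arguments. Unset Strict Implicit. Unset Printing Implicit Defensive.
Import Order.TTheory GRing.Theory Num.Theory.
Local Open Scope ring_scope.

(* formal power series: f k = coefficient of q^k *)
Definition fps := nat -> rat.

Definition fzero : fps := fun _ => 0.
Definition fone : fps := fun k => if k == 0%N then 1 else 0.
Definition fadd (f g : fps) : fps := fun k => f k + g k.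
Definition fmul (f g : fps) : fps :=
  fun k => \sum_(i < k.+1) f i * g (k - i)%N.

Definition fps_of_poly (p : {poly rat}) : fps := fun k => p`_k.

(* multiplicative inverse of a power series with invertible constant term,
   coefficients computed by the usual recursion *)
Fixpoint finv_upto (f : fps) (n : nat) : nat -> rat :=
  match n with
  | 0%N => fun k => if k == 0%N then (f 0%N)^-1 else 0
  | m.+1 => let g := finv_upto f m in
            fun k => if k == m.+1 then
                       - (f 0%N)^-1 * \sum_(i < m.+1) f i.+1 * g (m - i)%N
                     else g k
  end.
Definition finv (f : fps) : fps := fun k => finv_upto f k k.

Definition qpoch (R : comNzRingType) (a q : R) (n : nat) : R :=
  \prod_(j < n) (1 - a * q ^+ j).

Definition fps_lim (s : nat -> fps) (P : fps) : Prop :=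
  forall k : nat, exists N : nat, forall M : nat, (N <= M)%N -> s M k = P k.

Definition lhs_term (n : nat) : fps :=
  match n with
  | 0%N => fone
  | 1%N => fmul (fps_of_poly ('X^2 + 'X^3)) (finv (fps_of_poly (1 - 'X^2)))
  | _ => fmul (fps_of_poly (qpoch (- 'X^3) 'X^4 (n.-1)
                            * 'X^(2 * n)%N * (1 + 'X^((2 * n).-1)%N)))
              (finv (fps_of_poly (qpoch 'X^2 'X^2 n)))
  end.

Definition rhs_factor (n : nat) : fps :=
  if (n == 0%N) || ((n %% 8)%N \in [:: 1%N; 5%N; 6%N]) then fone
  else finv (fps_of_poly (1 - 'X^n)).

(* Main.v *)
Require Import Defs.
From mathcomp Require Import all_boot all_order all_algebra ring zify.
Set Implicit Arguments. Unset Strict Implicit. Unset Printing Implicit Defensive.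
Import Order.TTheory GRing.Theory Num.Theory.
Local Open Scope ring_scope.

Definition cong (K : nat) (p q : {poly rat}) := forall i, (i < K)%N -> p`_i = q`_i.

Lemma cong_refl K p : cong K p p. Proof. by []. Qed.
Arguments cong_refl {K p}.
Lemma cong_sym K p q : cong K p q -> cong K q p.
Proof. by move=> H i Hi; rewrite H. Qed.
Lemma cong_trans K p q r : cong K p q -> cong K q r -> cong K p r.
Proof. by move=> H1 H2 i Hi; rewrite H1 // H2. Qed.
Lemma congD K p q p' q' : cong K p p' -> cong K q q' -> cong K (p + q) (p' + q').
Proof. by move=> H1 H2 i Hi; rewrite !coefD H1 // H2. Qed.
Lemma congM K p q p' q' : cong K p p' -> cong K q q' -> cong K (p * q) (p' * q').
Proof.
move=> H1 H2 i Hi; rewrite !coefM; apply: eq_bigr => j _.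
have Hj : (j < K)%N by apply: leq_ltn_trans Hi; rewrite -ltnS.
rewrite H1 // H2 //; apply: leq_ltn_trans Hi; exact: leq_subr.
Qed.
Lemma cong_prod K n (F G : nat -> {poly rat}) :
  (forall i, (i < n)%N -> cong K (F i) (G i)) ->
  cong K (\prod_(i < n) F i) (\prod_(i < n) G i).
Proof.
elim: n => [|n IH] H; first by rewrite !big_ord0.
rewrite !big_ord_recr /=; apply: congM; last exact: H.
by apply: IH => i Hi; apply: H; apply: ltnW.
Qed.
Lemma cong_sum K n (F G : nat -> {poly rat}) :
  (forall i, (i < n)%N -> cong K (F i) (G i)) ->
  cong K (\sum_(i < n) F i) (\sum_(i < n) G i).
Proof.
elim: n => [|n IH] H; first by rewrite !big_ord0.
rewrite !big_ord_recr /=; apply: congD; last exact: H.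
by apply: IH => i Hi; apply: H; apply: ltnW.
Qed.

Lemma cong_X1 K e : (K <= e)%N -> cong K ('X^e) 0.
Proof.
move=> He i Hi; rewrite coefXn coefC; case: eqP => [Hie|]; last by case: (i == 0%N).
by move: Hi; rewrite Hie ltnNge He.
Qed.
Lemma cong_1X K e c : (K <= e)%N -> cong K (1 + c *: 'X^e) 1.
Proof.
move=> He; rewrite -[X in cong _ _ X]addr0; apply: congD => // i Hi.
by rewrite coefZ coefXn ltn_eqF ?mulr0 ?coefC; [case: (i == 0%N)|apply: leq_trans Hi He].
Qed.

Definition tr (K : nat) (f : fps) : {poly rat} := \poly_(i < K) f i.

Lemma tr_add K f g : tr K (fadd f g) = tr K f + tr K g.
Proof. by apply/polyP => i; rewrite coefD !coef_poly; case: ifP; rewrite ?addr0. Qed.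
Lemma tr_mul K f g : cong K (tr K (fmul f g)) (tr K f * tr K g).
Proof.
move=> i Hi; rewrite coefM coef_poly Hi /fmul; apply: eq_bigr => j _.
have Hj : (j < K)%N by apply: leq_ltn_trans Hi; rewrite -ltnS.
rewrite !coef_poly Hj ifT //; apply: leq_ltn_trans Hi; exact: leq_subr.
Qed.
Lemma tr_poly K p : cong K (tr K (fps_of_poly p)) p.
Proof. by move=> i Hi; rewrite coef_poly Hi. Qed.
Lemma tr_one K : cong K (tr K fone) 1.
Proof. by move=> i Hi; rewrite coef_poly Hi coef1 /fone; case: (i == 0%N). Qed.
Lemma tr_zero K : tr K fzero = 0.
Proof. by apply/polyP => i; rewrite coef_poly coefC; case: ifP => //; case: (i == 0%N). Qed.

Lemma tr_bigadd K n (F : nat -> fps) :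
  tr K (\big[fadd/fzero]_(i < n) F i) = \sum_(i < n) tr K (F i).
Proof.
elim: n F => [|n IH] F; first by rewrite !big_ord0 tr_zero.
rewrite !big_ord_recl tr_add -(IH (fun j => F j.+1)); congr (_ + tr K _).
Qed.
Lemma tr_bigmul K n (F : nat -> fps) :
  cong K (tr K (\big[fmul/fone]_(i < n) F i)) (\prod_(i < n) tr K (F i)).
Proof.
elim: n F => [|n IH] F; first by rewrite !big_ord0; apply: tr_one.
rewrite !big_ord_recl. eapply cong_trans; first exact: tr_mul.
eapply congM; first exact: cong_refl.
have -> : \big[fmul/fone]_(i < n) F (lift ord0 i) = \big[fmul/fone]_(i < n) F i.+1.
  by apply: eq_bigr => i _; rewrite lift0.
have -> : \prod_(i < n) tr K (F (lift ord0 i)) = \prod_(i < n) tr K (F i.+1).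
  by apply: eq_bigr => i _; rewrite lift0.
exact (IH (fun j => F j.+1)).
Qed.

Lemma finv_upto_stable f m k : (k <= m)%N -> finv_upto f m k = Defs.finv f k.
Proof.
elim: m => [|m IH] Hk; first by move: Hk; rewrite leqn0 => /eqP ->.
rewrite /=; case: eqP => [->|Hne]; first by rewrite /Defs.finv /= ?eqxx.
by apply: IH; move: Hk; rewrite leq_eqVlt => /orP [/eqP|] //.
Qed.
Lemma finv0 f : Defs.finv f 0%N = (f 0%N)^-1.
Proof. by []. Qed.
Lemma finvS f m :
  Defs.finv f m.+1 = - (f 0%N)^-1 * \sum_(i < m.+1) f i.+1 * Defs.finv f (m - i)%N.
Proof.
rewrite /Defs.finv /= ?eqxx; congr (_ * _); apply: eq_bigr => i _.
by rewrite finv_upto_stable // leq_subr.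
Qed.
Lemma finv_conv f : f 0%N != 0 -> forall k,
  \sum_(i < k.+1) f i * Defs.finv f (k - i)%N = fone k.
Proof.
move=> H0 [|m]; first by rewrite big_ord1 subnn finv0 mulfV.
rewrite big_ord_recl subn0 finvS /fone /=.
have -> : \sum_(i < m.+1) f (lift ord0 i) * Defs.finv f (m.+1 - lift ord0 i)%N
        = \sum_(i < m.+1) f i.+1 * Defs.finv f (m - i)%N.
  by apply: eq_bigr => i _; rewrite lift0 subSS.
by rewrite mulrA mulrN mulfV // mulN1r addNr.
Qed.

Definition iv K (p : {poly rat}) := tr K (Defs.finv (fps_of_poly p)).
Lemma iv_ok K (p : {poly rat}) : p`_0 != 0 -> cong K (p * iv K p) 1.
Proof.
move=> H0 i Hi; rewrite coefM coef1.
have -> : (i == 0%N)%:R = fone i :> rat by rewrite /fone; case: (i == 0%N).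
rewrite -(finv_conv H0); apply: eq_bigr => j _.
rewrite coef_poly ifT //; apply: leq_ltn_trans Hi; exact: leq_subr.
Qed.
Lemma inv_uniq K (p u v : {poly rat}) : cong K (p * u) 1 -> cong K (p * v) 1 -> cong K u v.
Proof.
move=> Hu Hv.
have H1 : cong K u (u * (p * v)).
  rewrite -{1}[u]mulr1; eapply congM; [exact: cong_refl| exact: cong_sym].
have H2 : cong K ((p * u) * v) v.
  rewrite -[X in cong _ _ X]mul1r; eapply congM; [exact: Hu| exact: cong_refl].
by apply: cong_trans H1 _; rewrite mulrA [u * p]mulrC.
Qed.

Lemma cong_1mX K e : (K <= e)%N -> cong K (1 - 'X^e) 1.
Proof. by move=> He; rewrite -scaleN1r; apply: cong_1X. Qed.
Lemma cong_1pX K e : (K <= e)%N -> cong K (1 + 'X^e) 1.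
Proof. by move=> He; rewrite -[X in 1 + X]scale1r; apply: cong_1X. Qed.

Lemma trunc_prod K L (F : nat -> {poly rat}) : (K <= L)%N ->
  (forall n, (K <= n)%N -> cong K (F n) 1) ->
  cong K (\prod_(n < L) F n) (\prod_(n < K) F n).
Proof.
move=> HL HF; elim: L HL => [|L IH]; first by rewrite leqn0 => /eqP ->.
rewrite leq_eqVlt => /orP[/eqP <-|HL] //.
rewrite big_ord_recr /= -[X in cong _ _ X]mulr1.
eapply congM; [exact: IH | exact: HF].
Qed.

Definition Ap m : {poly rat} := qpoch (- 'X^3) ('X^4) m.
Definition Bp m : {poly rat} := qpoch ('X^2) ('X^2) m.

Lemma Ap_prod m : Ap m = \prod_(j < m) (1 + 'X^(4 * j+3)).
Proof.
rewrite /Ap /qpoch; apply: eq_bigr => j _.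
rewrite mulNr opprK -exprM -exprD; congr (1 + 'X^_); lia.
Qed.
Lemma Bp_prod m : Bp m = \prod_(j < m) (1 - 'X^(2 * j+2)).
Proof.
rewrite /Bp /qpoch; apply: eq_bigr => j _.
rewrite -exprM -exprD; congr (1 - 'X^_); lia.
Qed.
Lemma ApS m : Ap m.+1 = Ap m * (1 + 'X^(4 * m+3)).
Proof. by rewrite !Ap_prod big_ord_recr. Qed.
Lemma BpS m : Bp m.+1 = Bp m * (1 - 'X^(2 * m+2)).
Proof. by rewrite !Bp_prod big_ord_recr. Qed.

Lemma coef0_1pX e : (0 < e)%N -> (1 + 'X^e : {poly rat})`_0 = 1.
Proof. by case: e => // e _; rewrite coefD coef1 coefXn addr0. Qed.
Lemma coef0_1mX e : (0 < e)%N -> (1 - 'X^e : {poly rat})`_0 = 1.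
Proof. by case: e => // e _; rewrite coefB coef1 coefXn subr0. Qed.
Lemma coef0_Bp m : (Bp m)`_0 = 1.
Proof. by rewrite Bp_prod coef0_prod big1 // => j _; rewrite coef0_1mX // addn2. Qed.

Lemma A2 J : Ap (2 * J) =
  \prod_(i < J) ((1 + 'X^((8 * i).+3)) * (1 + 'X^((8 * i).+4.+3))).
Proof.
elim: J => [|J IH]; first by rewrite /Ap /qpoch !big_ord0.
rewrite (_ : (2 * J.+1 = (2 * J).+2)%N); last by lia.
rewrite ApS ApS IH big_ord_recr /= -mulrA; congr (_ * (_ * _)); congr (1 + 'X^_); lia.
Qed.

Lemma B4 J : Bp (4 * J) =
  \prod_(i < J) ((1 - 'X^((8 * i).+2)) * (1 - 'X^((8 * i).+4))
                 * (1 - 'X^((8 * i).+4.+2)) * (1 - 'X^((8 * i).+4.+4))).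
Proof.
elim: J => [|J IH]; first by rewrite /Bp /qpoch !big_ord0.
rewrite (_ : (4 * J.+1 = (4 * J).+4)%N); last by lia.
rewrite !BpS IH big_ord_recr /= -!mulrA.
congr (_ * (_ * (_ * (_ * _)))); congr (1 - 'X^_); lia.
Qed.

Definition dd (n : nat) : {poly rat} :=
  if (n == 0%N) || ((n %% 8)%N \in [:: 1%N; 5%N; 6%N]) then 1 else 1 - 'X^n.

Lemma D8 J : \prod_(n < 8 * J) dd n.+1 =
  \prod_(i < J) ((1 - 'X^((8 * i).+2)) * (1 - 'X^((8 * i).+3)) * (1 - 'X^((8 * i).+4))
                 * (1 - 'X^((8 * i).+4.+3)) * (1 - 'X^((8 * i).+4.+4))).
Proof.
elim: J => [|J IH]; first by rewrite !big_ord0.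
rewrite (_ : (8 * J.+1 = (8 * J).+4.+4)%N); last by lia.
rewrite !big_ord_recr /= IH.
rewrite /dd.
have -> : (((8 * J).+1 %% 8) = 1)%N by lia.
have -> : (((8 * J).+2 %% 8) = 2)%N by lia.
have -> : (((8 * J).+3 %% 8) = 3)%N by lia.
have -> : (((8 * J).+4 %% 8) = 4)%N by lia.
have -> : (((8 * J).+4.+1 %% 8) = 5)%N by lia.
have -> : (((8 * J).+4.+2 %% 8) = 6)%N by lia.
have -> : (((8 * J).+4.+3 %% 8) = 7)%N by lia.
have -> : (((8 * J).+4.+4 %% 8) = 0)%N by lia.
rewrite /=.
ring.
Qed.

Lemma E2 J : \prod_(i < 2 * J) (1 - 'X^((8 * i).+4.+2)) =
  \prod_(i < J) ((1 - 'X^((16 * i).+4.+2)) * (1 - 'X^((16 * i).+4.+4.+4.+2))) :> {poly rat}.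
Proof.
elim: J => [|J IH]; first by rewrite !big_ord0.
rewrite (_ : (2 * J.+1 = (2 * J).+2)%N); last by lia.
rewrite !big_ord_recr /= IH -mulrA; congr (_ * (_ * _)); congr (1 - 'X^_); lia.
Qed.

Definition T3 (i : nat) : {poly rat} :=
  (1 - 'X^((8 * i).+2)) * (1 - 'X^((8 * i).+4)) * (1 - 'X^((8 * i).+4.+4)).

Lemma AD J : Ap (2 * J) * \prod_(n < 8 * J) dd n.+1 =
  (\prod_(i < J) T3 i) *
  \prod_(i < J) ((1 - 'X^((16 * i).+4.+2)) * (1 - 'X^((16 * i).+4.+4.+4.+2))).
Proof.
rewrite A2 D8 -!big_split; apply: eq_bigr => i _ /=.
rewrite (_ : ((16 * i).+4.+4.+4.+2 = (8 * i).+4.+3 + (8 * i).+4.+3)%N); last by lia.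
rewrite (_ : ((16 * i).+4.+2 = (8 * i).+3 + (8 * i).+3)%N); last by lia.
rewrite !exprD /T3; ring.
Qed.

Lemma B4' J : Bp (4 * J) =
  (\prod_(i < J) T3 i) * \prod_(i < J) (1 - 'X^((8 * i).+4.+2)).
Proof. rewrite B4 -big_split; apply: eq_bigr => i _ /=; rewrite /T3; ring. Qed.

Lemma Key K m : (K <= m)%N -> cong K (Ap m * \prod_(n < K) dd n) (Bp m).
Proof.
move=> Hm.
have TA : forall L, (K <= L)%N ->
    cong K (\prod_(j < L) (1 + 'X^(4 * j + 3))) (\prod_(j < K) (1 + 'X^(4 * j + 3))).
  move=> L HL; refine (@trunc_prod K L (fun j => 1 + 'X^(4 * j + 3)) HL _) => n Hn; apply cong_1pX; lia.
have TB : forall L, (K <= L)%N ->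
    cong K (\prod_(j < L) (1 - 'X^(2 * j + 2))) (\prod_(j < K) (1 - 'X^(2 * j + 2))).
  move=> L HL; refine (@trunc_prod K L (fun j => 1 - 'X^(2 * j + 2)) HL _) => n Hn; apply cong_1mX; lia.
have TE : forall L, (K <= L)%N ->
    cong K (\prod_(j < L) (1 - 'X^((8 * j).+4.+2))) (\prod_(j < K) (1 - 'X^((8 * j).+4.+2))).
  move=> L HL; refine (@trunc_prod K L (fun j => 1 - 'X^((8 * j).+4.+2)) HL _) => n Hn; apply cong_1mX; lia.
have HA : cong K (Ap m) (Ap (2 * K)).
  rewrite !Ap_prod; eapply cong_trans; first exact (TA m Hm).
  apply cong_sym; apply TA; lia.
have HB : cong K (Bp m) (Bp (4 * K)).
  rewrite !Bp_prod; eapply cong_trans; first exact (TB m Hm).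
  apply cong_sym; apply TB; lia.
have HC : cong K (\prod_(n < K) dd n) (\prod_(n < 8 * K) dd n.+1).
  have -> : \prod_(n < 8 * K) dd n.+1 = \prod_(n < (8 * K).+1) dd n.
    rewrite big_ord_recl {2}/dd /= mul1r; apply eq_bigr => i _; by rewrite ?lift0.
  apply cong_sym; have HL : (K <= (8 * K).+1)%N by lia.
  refine (@trunc_prod K _ dd HL _) => n Hn; rewrite /dd; case: ifP => _; first apply cong_refl.
  by apply cong_1mX.
have HE : cong K (\prod_(j < 2 * K) (1 - 'X^((8 * j).+4.+2)))
                 (\prod_(j < K) (1 - 'X^((8 * j).+4.+2))).
  apply TE; lia.
eapply cong_trans; first by eapply congM; [exact HA | exact HC].
rewrite AD -E2.
eapply cong_trans; last by apply cong_sym; exact HB.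
rewrite B4'; eapply congM; [apply cong_refl | exact HE].
Qed.

Lemma tr_term K p r :
  cong K (tr K (fmul (fps_of_poly p) (Defs.finv (fps_of_poly r)))) (p * iv K r).
Proof.
eapply cong_trans; first exact: tr_mul.
eapply congM; [exact: tr_poly | apply cong_refl].
Qed.

Lemma lterm_eq K m : cong K (tr K (lhs_term m.+1))
  (Ap m * 'X^(2 * m.+1) * (1 + 'X^((2 * m.+1).-1)) * iv K (Bp m.+1)).
Proof.
case: m => [|m]; last exact: tr_term.
have -> : Ap 0 * 'X^(2 * 1) * (1 + 'X^((2 * 1).-1)) = 'X^2 + 'X^3.
  have -> : 'X^3 = 'X^2 * 'X^1 :> {poly rat} by rewrite -exprD.
  rewrite /Ap /qpoch big_ord0 /=; ring.
have -> : Bp 1 = 1 - 'X^2 by rewrite BpS /Bp /qpoch big_ord0 mul1r.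
exact: tr_term.
Qed.

Lemma iv1 K : cong K (iv K 1) 1.
Proof.
apply inv_uniq with (p := 1); first by apply iv_ok; rewrite coef1 oner_neq0.
by rewrite mulr1; apply cong_refl.
Qed.

Lemma lhs_tel K m :
  cong K (\sum_(n < m.+1) tr K (lhs_term n)) (Ap m * iv K (Bp m)).
Proof.
elim: m => [|m IH].
  rewrite big_ord1 /Ap /Bp /qpoch !big_ord0 mul1r.
  refine (cong_trans _ _); first exact: tr_one.
  apply cong_sym; exact: iv1.
rewrite big_ord_recr /=.
have Hinv : cong K (iv K (Bp m)) ((1 - 'X^(2 * m + 2)) * iv K (Bp m.+1)).
  apply inv_uniq with (p := Bp m); first by apply iv_ok; rewrite coef0_Bp oner_neq0.
  rewrite mulrA -BpS; apply iv_ok; by rewrite coef0_Bp oner_neq0.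
refine (cong_trans _ _).
  refine (congD _ _); first exact: IH.
  exact: lterm_eq.
refine (cong_trans _ _).
  refine (congD _ _); last apply cong_refl.
  refine (congM _ _); first apply cong_refl.
  exact: Hinv.
rewrite ApS (_ : (2 * m.+1 = 2 * m + 2)%N); last by lia.
rewrite (_ : ((2 * m + 2).-1 = 2 * m + 1)%N); last by lia.
rewrite (_ : (4 * m + 3 = (2 * m + 2) + (2 * m + 1))%N); last by lia.
rewrite (exprD 'X (2 * m + 2) (2 * m + 1)).
have -> : forall a b c e : {poly rat},
    a * ((1 - b) * e) + a * b * (1 + c) * e = a * (1 + b * c) * e.
  by move=> a b c e; ring.
apply cong_refl.
Qed.

Definition cc K (n : nat) : {poly rat} :=
  if (n == 0%N) || ((n %% 8)%N \in [:: 1%N; 5%N; 6%N]) then 1 else iv K (1 - 'X^n).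

Lemma lhs_fin K m : (K <= m)%N ->
  cong K (Ap m * iv K (Bp m)) (\prod_(n < K) cc K n).
Proof.
move=> Hm.
set Cc := \prod_(n < K) cc K n.
set D := \prod_(n < K) dd n.
have HCR : cong K (D * Cc) 1.
  rewrite /D /Cc -big_split.
  have E1 : \prod_(n < K) (1 : {poly rat}) = 1 by rewrite big1.
  rewrite -[X in cong _ _ X]E1.
  refine (@cong_prod K K (fun n => dd n * cc K n) (fun _ => 1) _) => n Hn; rewrite /dd /cc; case: ifP => H.
    rewrite mulr1; apply cong_refl.
  apply iv_ok; rewrite coef0_1mX ?oner_neq0 //.
  by move: H; case: n {Hn} => //.
have -> : Ap m * iv K (Bp m) = Ap m * iv K (Bp m) * 1 by rewrite mulr1.
refine (cong_trans _ _).
  refine (congM cong_refl _); apply cong_sym; exact HCR.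
have -> : Ap m * iv K (Bp m) * (D * Cc) = (Ap m * D) * iv K (Bp m) * Cc by ring.
refine (cong_trans _ _).
  refine (congM _ cong_refl).
  refine (congM (Key Hm) cong_refl).
rewrite -[X in cong _ _ X]mul1r.
refine (congM _ cong_refl).
by apply iv_ok; rewrite coef0_Bp oner_neq0.
Qed.

Lemma rhs_fin K M : (K <= M)%N ->
  cong K (tr K (\big[fmul/fone]_(n < M) rhs_factor n)) (\prod_(n < K) cc K n).
Proof.
move=> HM.
refine (cong_trans (@tr_bigmul K M rhs_factor) _).
refine (cong_trans _ _).
  refine (@cong_prod K M (fun n => tr K (rhs_factor n)) (cc K) _) => n Hn.
  rewrite /rhs_factor /cc; case: ifP => _; first exact: tr_one.
  apply cong_refl.
refine (@trunc_prod K M (cc K) HM _) => n Hn.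
rewrite /cc; case: ifP => H; first by apply cong_refl.
apply inv_uniq with (p := 1 - 'X^n).
  apply iv_ok; rewrite coef0_1mX ?oner_neq0 //.
  by move: H; case: n {Hn} => //.
by rewrite mulr1; apply cong_1mX.
Qed.

Lemma coef_tr K f k : (k < K)%N -> f k = (tr K f)`_k.
Proof. by move=> Hk; rewrite coef_poly Hk. Qed.

Theorem theorem12 :
  exists P : fps,
    fps_lim (fun M => \big[fadd/fzero]_(n < M) lhs_term n) P /\
    fps_lim (fun M => \big[fmul/fone]_(n < M) rhs_factor n) P.
Proof.
exists (fun k => (\big[fmul/fone]_(n < k.+1) rhs_factor n) k); split => k.
  exists k.+2 => M HM.
  case: M HM => [|m] // HM.
  rewrite (@coef_tr k.+1) // (@coef_tr k.+1 (\big[fmul/fone]_(n < k.+1) rhs_factor n)) //.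
  have H1 := rhs_fin (leqnn k.+1).
  have HM2 : (k.+1 <= m)%N by [].
  have H2 := lhs_fin HM2.
  have H3 := @lhs_tel k.+1 m.
  rewrite tr_bigadd.
  rewrite (H3 k) // (H2 k) // (H1 k) //.
exists k.+1 => M HM.
rewrite (@coef_tr k.+1) // (@coef_tr k.+1 (\big[fmul/fone]_(n < k.+1) rhs_factor n)) //.
rewrite (rhs_fin HM) // (rhs_fin (leqnn k.+1)) //.
Qed.
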